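(* Let $\Gamma$ be an Arf numerical semigroup with multiplicity $e>1$ and conductor $c$, let $e'\in\Gamma\setminus\{0\}$, $\Gamma_{e'}=\{0\}\cup(e'+\Gamma)$, and $c'=c+e'$ (the conductor of $\Gamma_{e'}$). Then \[ \delta^2_{\Gamma_{e'}}(c'+e'-1)=\begin{cases}4 & \text{if } e'=e,\\ 5 & \text{otherwise.}\end{cases} \]
   Context: A numerical semigroup is a subset $\Gamma\subseteq\mathbb N$ containing $0$, closed under addition, with finite complement; write $\Gamma=\{0=\rho_1<\rho_2<\cdots\}$; multiplicity $e=\rho_2$; conductor = least $c$ with $c+\mathbb N\subseteq\Gamma$. $\Gamma$ is Arf if $\rho_i+\rho_j-\rho_k\in\Gamma$ for all $i\ge j\ge k$. For a numerical semigroup $S$: $D_S(x)=\{s\in S:x-s\in S\}$ and $\delta^2_S(m)=\min\{|D_S(m_1)\cup D_S(m_2)|: m\le m_1<m_2,\ m_i\in S\}$. *)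

(* Defs.v *)
From mathcomp Require Import all_boot.
Set Implicit Arguments.
Unset Strict Implicit.
Unset Printing Implicit Defensive.

Definition numerical_semigroup (S : pred nat) : Prop :=
  [/\ S 0, (forall a b, S a -> S b -> S (a + b)) &
      exists N, forall n, N <= n -> S n].

Definition arf (S : pred nat) : Prop :=
  forall x y z, S x -> S y -> S z -> y <= x -> z <= y -> S (x + y - z).

Definition is_multiplicity (S : pred nat) (e : nat) : Prop :=
  [/\ 0 < e, S e & forall s, 0 < s -> S s -> e <= s].

Definition is_conductor (S : pred nat) (c : nat) : Prop :=
  (forall n, c <= n -> S n) /\
  (forall c', (forall n, c' <= n -> S n) -> c <= c').

Definition shift_sg (S : pred nat) (e' : nat) : pred nat :=
  fun n => (n == 0) || ((e' <= n) && S (n - e')).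

(* D_S(x) = { s in S : x - s in S } (as a duplicate-free list; every such s is <= x). *)
Definition Dset (S : pred nat) (x : nat) : seq nat :=
  [seq s <- iota 0 x.+1 | S s && S (x - s)].

Definition Dunion_card (S : pred nat) (m1 m2 : nat) : nat :=
  size (undup (Dset S m1 ++ Dset S m2)).

Definition delta2_is (S : pred nat) (m k : nat) : Prop :=
  (exists m1 m2, [/\ m <= m1, m1 < m2, S m1, S m2 & Dunion_card S m1 m2 = k]) /\
  (forall m1 m2, m <= m1 -> m1 < m2 -> S m1 -> S m2 -> k <= Dunion_card S m1 m2).

(* Main.v *)
Require Import Defs.
From mathcomp Require Import all_boot.
From mathcomp Require Import zify.

Lemma card_eq (L W : seq nat) : uniq W -> {subset W <= L} -> {subset L <= W} ->
  size (undup L) = size W.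
Proof.
move=> uW WL LW; apply/eqP; rewrite eqn_leq; apply/andP; split.
- apply: uniq_leq_size; first exact: undup_uniq.
  by move=> x; rewrite mem_undup; apply: LW.
- apply: uniq_leq_size => // x hx; rewrite mem_undup; exact: WL.
Qed.

Lemma card_ge (L W : seq nat) : uniq W -> {subset W <= L} -> size W <= size (undup L).
Proof.
move=> uW WL; apply: uniq_leq_size => // x hx; rewrite mem_undup; exact: WL.
Qed.

Lemma mem_Dset (S : pred nat) x s : (s \in Dset S x) = [&& s <= x, S s & S (x - s)].
Proof.
rewrite /Dset mem_filter mem_iota /= ltnS.
by case: (s <= x); case: (S s); case: (S (x - s)).
Qed.

Ltac solveG Gc := match goal with |- is_true (?P ?t) => first [ apply: Gc; lia |
  match goal with H : is_true (P ?u) |- _ => (have -> : t = u by lia); exact H end ] end.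
Ltac solveS Sin Gc := first [ done | match goal with |- is_true (?Q ?t) => (have -> : t = 0 by lia); done end
  | apply: Sin; [lia | solveG Gc] ].
Ltac solveD inD Sin Gc := apply: inD; [lia | solveS Sin Gc | solveS Sin Gc].

Theorem lemma4p10 (G : pred nat) (e c e' : nat) :
  numerical_semigroup G -> arf G ->
  is_multiplicity G e -> 1 < e ->
  is_conductor G c ->
  G e' -> 0 < e' ->
  delta2_is (shift_sg G e') ((c + e') + e' - 1) (if e' == e then 4 else 5).
Proof.
move=> [G0 Gadd _] Garf [e0 Ge emin] e1 [Gc cmin] Ge' e'0.
have c0 : 0 < c.
  case: (posnP c) => // c00.
  have h1 : c <= 1 by rewrite c00.
  have := emin 1 isT (Gc 1 h1); lia.
have nf : ~~ G (c - 1).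
  apply/negP => Gf.
  suff H : forall n, c - 1 <= n -> G n by have := cmin _ H; lia.
  move=> n hn; case: (ltnP n c) => h; last exact: Gc.
  by have -> : n = c - 1 by lia.
have c2 : 1 < c.
  case: (ltnP 1 c) => // h.
  by move: nf; rewrite (_ : c - 1 = 0) ?G0 //; lia.
have ee' : e <= e' := emin e' e'0 Ge'.
have nosplit : forall a b, G a -> G b -> a + b = c - 1 -> False.
  by move=> a b Ga Gb h; move: nf; rewrite -h Gadd.
have arfk : forall a b, G a -> G b -> 0 < a -> 0 < b -> a + b = c - 1 + e -> False.
  move=> a b Ga Gb a0 b0 h; case: (leqP b a) => hab.
  - have := Garf a b e Ga Gb Ge hab (emin b b0 Gb).
    by rewrite h addnK; move/negP: nf.
  - have := Garf b a e Gb Ga Ge (ltnW hab) (emin a a0 Ga).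
    by rewrite addnC h addnK; move/negP: nf.
set S := shift_sg G e'.
have Sin : forall n, e' <= n -> G (n - e') -> S n.
  by move=> n h1 h2; rewrite /S /shift_sg h1 h2 orbT.
have S0 : S 0 by [].
have SP : forall n, S n -> n = 0 \/ (e' <= n /\ G (n - e')).
  by move=> n /orP [/eqP ->|/andP [h1 h2]]; auto.
have inD : forall x s, s <= x -> S s -> S (x - s) -> s \in Dset S x.
  by move=> x s h1 h2 h3; rewrite mem_Dset h1 h2 h3.
split.
- exists (c - 1 + 2 * e'), (c - 1 + e + 2 * e'); split; try lia.
  + apply: Sin; first lia. apply: Gc; lia.
  + apply: Sin; first lia. apply: Gc; lia.
  rewrite /Dunion_card.
  case: eqP => [E|NE].
  + rewrite (@card_eq _ [:: 0; c - 1 + 2 * e'; c - 1 + e + 2 * e'; e']) //.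
    * rewrite /= !inE; lia.
    * move=> s; rewrite !inE => /or4P [] /eqP -> ; rewrite mem_cat; apply/orP.
      -- left; solveD inD Sin Gc.
      -- left; solveD inD Sin Gc.
      -- right; solveD inD Sin Gc.
      -- right; solveD inD Sin Gc.
    * move=> s; rewrite mem_cat !mem_Dset => /orP [] /and3P [h1 /SP h2 /SP h3];
        rewrite !inE.
      -- case: h2 => [->|[h2 G2]]; first by [].
         case: h3 => [h3|[h3 G3]]; first lia.
         exfalso; apply: (nosplit _ _ G2 G3); lia.
      -- case: h2 => [->|[h2 G2]]; first by [].
         case: h3 => [h3|[h3 G3]]; first lia.
         case: (posnP (s - e')) => a0; first lia.
         case: (posnP (c - 1 + e + 2 * e' - s - e')) => b0; first lia.
         exfalso; apply: (arfk _ _ G2 G3) => //; lia.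
  + rewrite (@card_eq _ [:: 0; c - 1 + 2 * e'; c - 1 + e + 2 * e'; e'; e' + (c - 1) + e]) //.
    * rewrite /= !inE; lia.
    * move=> s; rewrite !inE => /or4P [||| /orP []] /eqP -> ; rewrite mem_cat; apply/orP.
      -- left; solveD inD Sin Gc.
      -- left; solveD inD Sin Gc.
      -- right; solveD inD Sin Gc.
      -- right; solveD inD Sin Gc.
      -- right; solveD inD Sin Gc.
    * move=> s; rewrite mem_cat !mem_Dset => /orP [] /and3P [h1 /SP h2 /SP h3];
        rewrite !inE.
      -- case: h2 => [->|[h2 G2]]; first by [].
         case: h3 => [h3|[h3 G3]]; first lia.
         exfalso; apply: (nosplit _ _ G2 G3); lia.
      -- case: h2 => [->|[h2 G2]]; first by [].
         case: h3 => [h3|[h3 G3]]; first lia.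
         case: (posnP (s - e')) => a0; first lia.
         case: (posnP (c - 1 + e + 2 * e' - s - e')) => b0; first lia.
         exfalso; apply: (arfk _ _ G2 G3) => //; lia.
- move=> m1 m2 hm1 hm12 _ _; rewrite /Dunion_card.
  have m2in : forall s, s \in Dset S m2 -> s \in Dset S m1 ++ Dset S m2.
    by move=> s h; rewrite mem_cat h orbT.
  have m1in : forall s, s \in Dset S m1 -> s \in Dset S m1 ++ Dset S m2.
    by move=> s h; rewrite mem_cat h.
  have base : forall W, uniq W -> {subset W <= Dset S m1 ++ Dset S m2} ->
     {subset [:: 0; m1; m2; e'] <= Dset S m1 ++ Dset S m2}.
    move=> _ _ _ s; rewrite !inE => /or4P [] /eqP ->.
    -- apply: m1in; solveD inD Sin Gc.
    -- apply: m1in; solveD inD Sin Gc.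
    -- apply: m2in; solveD inD Sin Gc.
    -- apply: m2in; solveD inD Sin Gc.
  have B : forall s, s \in Dset S m1 ++ Dset S m2 -> uniq [:: s; 0; m1; m2; e'] ->
      5 <= size (undup (Dset S m1 ++ Dset S m2)).
    move=> s hs u; change (size [:: s; 0; m1; m2; e'] <= size (undup (Dset S m1 ++ Dset S m2))); apply: card_ge u _.
    move=> x; rewrite in_cons => /orP [/eqP ->|hx] //.
    by apply: (base [::]).
  case: eqP => [E|NE].
  + apply: (@card_ge _ [:: 0; m1; m2; e']); first by rewrite /= !inE; lia.
    exact: (base [::]).
  have ee : e < e' by lia.
  case: (eqVneq (m2 - e') m1) => h.
  + case: (leqP c (m1 - 2 * e')) => hc.
    * apply: (B (m1 - e')); last by rewrite /= !inE; lia.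
      apply: m1in; solveD inD Sin Gc.
    * apply: (B (e' + e)); last by rewrite /= !inE; lia.
      apply: m2in; solveD inD Sin Gc.
  + apply: (B (m2 - e')); last by rewrite /= !inE; lia.
    apply: m2in; solveD inD Sin Gc.
Qed.
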